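(* Let $k,m$ be positive integers, $n=4k$, and let $A\in\mathbb{R}^{m\times n}$ have $2k$-restricted isometry constant $\delta_{2k}\in[\frac{\sqrt{2}}{2},1)$. Let $x\in\mathbb{R}^n$, $\epsilon\ge 0$, $e\in\mathbb{R}^m$ with $\|e\|_2\le\epsilon$, and $y=Ax+e$. For $p\in(0,1)$ let $x^{\star}$ be a solution of $\min_{\gamma\in\mathbb{R}^n}\|\gamma\|_p$ subject to $\|y-A\gamma\|_2\le\epsilon$, and let $T_0^c=\{k+1,\dots,n\}$. Let $$\bar C(p)=(1+\delta_{2k})2^{\frac p2-1}\Big(\frac{g(p)}{1-\delta_{2k}}\Big)^{p/2}.$$ Then for each $p\in(0,1)$ with $\bar C(p)<1$, $$\|x-x^{\star}\|_p^p\le \bar C_0\|x_{T_0^c}\|_p^p+\bar C_1k^{1-\frac p2}\epsilon^p,\qquad \bar C_0=\frac{2(1+\bar C(p))}{1-\bar C(p)},\quad \bar C_1=\frac{2^{p+2}}{(1-\delta_{2k})^{\frac p2}(1-\bar C(p))}.$$ In particular, if $\epsilon=0$ and $x$ is $k$-sparse, then $x^{\star}=x$.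
   Context: For $1\le s\le n$, the $s$-restricted isometry constant $\delta_s$ of $A$ is the smallest constant such that $(1-\delta_s)\|z\|_2^2\le\|Az\|_2^2\le(1+\delta_s)\|z\|_2^2$ for all $s$-sparse $z\in\mathbb{R}^n$. For $p\in(0,1)$, $\|\gamma\|_p=(\sum_i|\gamma_i|^p)^{1/p}$. For a vector $v$ and index set $T$, $v_T$ is the vector equal to $v$ on $T$ and zero elsewhere. $g(p)=\frac{p}{2}(1-\frac{p}{2})^{\frac{2}{p}-1}$. *)

(* Defs.v *)
From HB Require Import structures.
From mathcomp Require Import all_boot all_order all_algebra.
From mathcomp Require Import reals exp.
Set Implicit Arguments. Unset Strict Implicit. Unset Printing Implicit Defensive.
Import Order.TTheory GRing.Theory Num.Theory.
Local Open Scope ring_scope.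

Section Defs.
Variable R : realType.

Definition l2norm (n : nat) (v : 'cV[R]_n) : R := Num.sqrt (\sum_i (v i ord0) ^+ 2).

Definition lpnorm (p : R) (n : nat) (v : 'cV[R]_n) : R :=
  (\sum_i `|v i ord0| `^ p) `^ (1 / p).

Definition sparse (s : nat) (n : nat) (z : 'cV[R]_n) : Prop :=
  (#|[set i : 'I_n | z i ord0 != 0%R]| <= s)%N.

Definition RIP_bound (m n : nat) (A : 'M[R]_(m, n)) (s : nat) (d : R) : Prop :=
  forall z : 'cV[R]_n, sparse s z ->
    (1 - d) * l2norm z ^+ 2 <= l2norm (A *m z) ^+ 2 /\
    l2norm (A *m z) ^+ 2 <= (1 + d) * l2norm z ^+ 2.

Definition is_RIC (m n : nat) (A : 'M[R]_(m, n)) (s : nat) (d : R) : Prop :=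
  RIP_bound A s d /\ forall d', RIP_bound A s d' -> d <= d'.

Definition restrict (n : nat) (v : 'cV[R]_n) (T : {set 'I_n}) : 'cV[R]_n :=
  \col_i (if i \in T then v i ord0 else 0).

Definition g (p : R) : R := p / 2 * (1 - p / 2) `^ (2 / p - 1).

Definition Cbar (d p : R) : R :=
  (1 + d) * 2 `^ (p / 2 - 1) * (g p / (1 - d)) `^ (p / 2).

Definition C0bar (d p : R) : R := 2 * (1 + Cbar d p) / (1 - Cbar d p).

Definition C1bar (d p : R) : R :=
  2 `^ (p + 2) / ((1 - d) `^ (p / 2) * (1 - Cbar d p)).

End Defs.

(* Main.v *)
Require Import Defs.
From HB Require Import structures.
From mathcomp Require Import all_boot all_order all_algebra.
From mathcomp Require Import reals exp.
From mathcomp Require Import ring lra zify.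
From Stdlib Require Import Lia.
Import Order.TTheory GRing.Theory Num.Theory.
Local Open Scope ring_scope.

Module Aux.
Set Implicit Arguments. Unset Strict Implicit.
Section Scalar.
Context {R : realType}.
Implicit Types x y z r s t p : R.

Lemma amgm x y r : 0 <= x -> 0 <= y -> 0 < r -> r < 1 ->
  x `^ r * y `^ (1 - r) <= r * x + (1 - r) * y.
Proof.
move=> x0 y0 r0 r1.
have r1' : 0 < 1 - r by rewrite subr_gt0.
have i1 : 0 < r^-1 by rewrite invr_gt0.
have i2 : 0 < (1 - r)^-1 by rewrite invr_gt0.
have := @conjugate_powR R (x `^ r) (y `^ (1 - r)) r^-1 (1 - r)^-1
  (powR_ge0 _ _) (powR_ge0 _ _) i1 i2.
have e : r^-1^-1 + (1 - r)^-1^-1 = 1 by rewrite !invrK addrC subrK.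
move=> /(_ e).
rewrite -!powRrM !mulfV ?gt_eqF// !powRr1// !invrK.
by rewrite [x * r]mulrC [y * _]mulrC.
Qed.

Lemma powR_ge1 x y : 0 <= x -> x `^ y = 0 -> x = 0.
Proof. by move=> _ /powR_eq0_eq0. Qed.

Lemma subadd_powR s t p : 0 <= s -> 0 <= t -> 0 < p -> p <= 1 ->
  (s + t) `^ p <= s `^ p + t `^ p.
Proof.
move=> s0 t0 p0 p1.
have [z0|zn0] := eqVneq (s + t) 0.
  have [-> ->] : s = 0 /\ t = 0 by split; lra.
  by rewrite addr0 powR0 ?gt_eqF// addr0.
have zp : 0 < s + t by rewrite lt_neqAle eq_sym zn0 addr_ge0.
have key : forall a, 0 <= a -> a <= s + t -> (s + t) `^ p * (a / (s + t)) <= a `^ p.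
  move=> a a0 az.
  have ea : a `^ p = (s + t) `^ p * (a / (s + t)) `^ p.
    rewrite -powRM; last 2 first.
    - exact: ltW.
    - by rewrite divr_ge0 // ltW.
    by rewrite mulrC divfK // gt_eqF.
  rewrite ea ler_wpM2l ?powR_ge0//.
  have [->|ap] := eqVneq a 0; first by rewrite mul0r powR_ge0.
  apply: ger1_powR => //; rewrite divr_gt0 ?ler_pdivrMr //= ?mul1r //.
  by rewrite lt_neqAle eq_sym ap.
have hs : s <= s + t by lra.
have ht : t <= s + t by lra.
have := key s s0 hs; have := key t t0 ht.
move=> h1 h2; apply: le_trans (lerD h2 h1).
by rewrite -mulrDr -mulrDl divff ?mulr1 ?gt_eqF.
Qed.

End Scalar.

Section Scalar2.
Context {R : realType}.
Implicit Types x y z r s t p : R.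

Lemma powR_invr y a : 0 <= y -> (y^-1) `^ a = (y `^ a)^-1.
Proof.
move=> y0; have -> : y^-1 = y `^ (-1) by rewrite powR_inv1.
by rewrite -powRrM mulN1r powRN.
Qed.

Lemma powR_divr x y a : 0 <= x -> 0 <= y -> (x / y) `^ a = x `^ a / y `^ a.
Proof.
by move=> x0 y0; rewrite powRM ?invr_ge0 // powR_invr.
Qed.

Lemma gamgm p x y : 0 < p -> p < 1 -> 0 <= x -> 0 <= y ->
  x `^ (2 / p - 1) * y <= g p * (x + y) `^ (2 / p).
Proof.
move=> p0 p1 x0 y0.
set r := 1 - p / 2.
have r0 : 0 < r by rewrite /r; lra.
have r1 : r < 1 by rewrite /r; lra.
have e1r : 1 - r = p / 2 by rewrite /r; ring.
have r1' : 0 < 1 - r by lra.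
have H := @amgm R (x / r) (y / (1 - r)) r (divr_ge0 x0 (ltW r0)) (divr_ge0 y0 (ltW r1')) r0 r1.
have e3 : r * (x / r) + (1 - r) * (y / (1 - r)) = x + y.
  by field; rewrite !gt_eqF.
rewrite e3 in H.
have tp0 : 0 < 2 / p by rewrite divr_gt0.
have H2 := @ge0_ler_powR R (2 / p) (ltW tp0) _ _
  (mulr_ge0 (powR_ge0 _ _) (powR_ge0 _ _)) (addr_ge0 x0 y0) H.
have E : ((x / r) `^ r * (y / (1 - r)) `^ (1 - r)) `^ (2 / p)
    = (x / r) `^ (2 / p - 1) * (y / (1 - r)).
  rewrite (powRM _ (powR_ge0 _ _) (powR_ge0 _ _)) -!powRrM.
  have -> : r * (2 / p) = 2 / p - 1 by rewrite /r; field; rewrite gt_eqF.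
  have -> : (1 - r) * (2 / p) = 1 by rewrite e1r; field; rewrite gt_eqF.
  by rewrite powRr1 // divr_ge0 // ltW.
rewrite /= E in H2.
have E2 : (x / r) `^ (2 / p - 1) = x `^ (2 / p - 1) / r `^ (2 / p - 1).
  by rewrite powR_divr // ltW.
rewrite E2 in H2.
have rq0 : 0 < r `^ (2 / p - 1) by rewrite powR_gt0.
rewrite /g -/r -e1r.
have -> : x `^ (2 / p - 1) * y
   = (x `^ (2 / p - 1) / r `^ (2 / p - 1) * (y / (1 - r))) * ((1 - r) * r `^ (2 / p - 1)).
  by field; rewrite !gt_eqF.
rewrite [X in _ <= X]mulrC; apply: ler_wpM2r => //.
by rewrite mulr_ge0 // ltW.
Qed.
End Scalar2.

Section Scalar3.
Context {R : realType}.
Implicit Types x y z r s t p : R.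

Lemma pmean (I : finType) (T : {set I}) (a : I -> R) r :
  0 < r -> r < 1 -> (forall i, 0 <= a i) -> (0 < #|T|)%N ->
  \sum_(i in T) (a i) `^ r <= #|T|%:R * ((\sum_(i in T) a i) / #|T|%:R) `^ r.
Proof.
move=> r0 r1 a0 T0.
set N := #|T|%:R.
have N0 : 0 < N by rewrite /N ltr0n.
set m := (\sum_(i in T) a i) / N.
have m0 : 0 <= m by rewrite divr_ge0 ?sumr_ge0 // ltW.
have [mz|mp] := eqVneq m 0.
  have S0 : \sum_(i in T) a i = 0.
    have : \sum_(i in T) a i = m * N by rewrite /m divfK // gt_eqF.
    by rewrite mz mul0r.
  have := S0; move/psumr_eq0P => /(_ (fun i _ => a0 i)) z.
  rewrite big1 ?mulr_ge0 ?powR_ge0 ?ltW //.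
  by move=> i iT; rewrite z // powR0 // gt_eqF.
have mpos : 0 < m by rewrite lt_neqAle eq_sym mp.
have step : forall i, (a i) `^ r <= m `^ r * (r * (a i / m) + (1 - r)).
  move=> i.
  have ea : (a i) `^ r = m `^ r * (a i / m) `^ r.
    rewrite -powRM //; last by rewrite divr_ge0 // ltW.
    by rewrite mulrC divfK // gt_eqF.
  rewrite ea ler_wpM2l ?powR_ge0 //.
  have := @amgm R (a i / m) 1 r (divr_ge0 (a0 i) (ltW mpos)) ler01 r0 r1.
  by rewrite powR1 mulr1 mulr1.
apply: le_trans (ler_sum _ (fun i _ => step i)) _.
rewrite -mulr_sumr big_split /= -mulr_sumr -mulr_suml sumr_const.
rewrite -/N mulrC ler_wpM2r ?powR_ge0 //.
have Sp : \sum_(i in T) a i != 0.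
  have : \sum_(i in T) a i = m * N by rewrite /m divfK // gt_eqF.
  by move=> ->; rewrite mulf_neq0 // gt_eqF.
have -> : (\sum_(i in T) a i) / m = N.
  by rewrite /m; field; rewrite Sp gt_eqF.
rewrite -mulr_natr -/N.
by have -> : r * N + (1 - r) * N = N by ring.
Qed.
End Scalar3.

Section Scalar4.
Context {R : realType}.
Implicit Types x y z r s t p : R.

Lemma g_ge0 p : 0 < p -> p < 1 -> 0 <= g p.
Proof. by move=> p0 p1; rewrite /g mulr_ge0 ?powR_ge0 // divr_ge0 // ltW. Qed.

Lemma FS p d eta0 u v w b c e :
  0 < p -> p < 1 -> 0 <= d -> d < 1 ->
  0 <= u -> 0 <= v -> 0 <= w -> 0 <= b -> 0 <= c -> 0 <= e ->
  eta0 <= u `^ (p / 2) ->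
  b <= v `^ (p / 2) ->
  w <= b `^ (2 / p - 1) * c ->
  (1 - d) * (u + v) <= (Num.sqrt ((1 + d) * w) + 2 * e) ^+ 2 ->
  eta0 <= Cbar d p * (b + c) + 2 `^ (p + 1) * e `^ p / (1 - d) `^ (p / 2).
Proof.
move=> p0 p1 d0 d1 u0 v0 w0 b0 c0 e0 He Hb Hw Hm.
set P := 1 + d; set M := 1 - d; set q := 2 / p - 1; set s := b + c.
set G := g p.
have P0 : 0 < P by rewrite /P; lra.
have M0 : 0 < M by rewrite /M; lra.
have tp0 : 0 < 2 / p by rewrite divr_gt0.
have q0 : 0 < q by rewrite /q subr_gt0 ltr_pdivlMr // mul1r; lra.
have s0 : 0 <= s by rewrite addr_ge0.
have G0 : 0 <= G by exact: g_ge0.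
have Hv : b `^ (2 / p) <= v.
  have := @ge0_ler_powR R (2 / p) (ltW tp0) _ _ b0 (powR_ge0 _ _) Hb.
  rewrite /= -powRrM.
  have -> : p / 2 * (2 / p) = 1 by field; rewrite gt_eqF.
  by rewrite powRr1.
have Eb : b `^ (2 / p) = b * b `^ q by rewrite mulr_powRB1.
have H34 : P * w - M * v <= (P / 2) `^ q * P * G * s `^ (2 / p).
  have bq0 : 0 <= b `^ q by exact: powR_ge0.
  have L1 : P * w - M * v <= b `^ q * (P * s - 2 * b).
    have h1 : P * w <= P * (b `^ q * c) by rewrite ler_pM2l.
    have h2 : M * (b * b `^ q) <= M * v by rewrite ler_pM2l // -Eb.
    have -> : b `^ q * (P * s - 2 * b) = P * (b `^ q * c) - M * (b * b `^ q).
      by rewrite /s /P /M; ring.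
    by apply: lerB.
  apply: le_trans L1 _.
  have [neg|pos] := lerP (P * s - 2 * b) 0.
    apply: le_trans (_ : 0 <= _); first by rewrite mulr_ge0_le0.
    apply: mulr_ge0; last exact: powR_ge0.
    apply: mulr_ge0 => //; apply: mulr_ge0; [exact: powR_ge0 | exact: ltW].
  have := gamgm p0 p1 (mulr_ge0 (ler0n _ 2) b0) (ltW pos).
  have -> : 2 * b + (P * s - 2 * b) = P * s by ring.
  rewrite -/q -/G (powRM _ (ler0n _ 2) b0) (powRM _ (ltW P0) s0).
  have -> : 2 / p = q + 1 by rewrite /q subrK.
  rewrite [P `^ (q + 1)]powRD; last by rewrite (gt_eqF P0) implybT.
  rewrite powRr1 ?(ltW P0) // powR_divr ?(ltW P0) //.
  have t0 : 0 < 2 `^ q by rewrite powR_gt0.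
  move=> H.
  rewrite -(ler_pM2l t0) mulrA.
  apply: le_trans H _.
  rewrite le_eqVlt; apply/orP; left; apply/eqP.
  by field; rewrite gt_eqF.
have H5 : P * w <= P * G * s `^ (2 / p).
  rewrite -mulrA ler_pM2l //; apply: le_trans Hw _.
  exact: gamgm.
set K := P * G * s `^ (2 / p).
have K0 : 0 <= K.
  by rewrite /K; apply: mulr_ge0; [apply: mulr_ge0 => //; exact: ltW | exact: powR_ge0].
set Z := Num.sqrt K.
have Z0 : 0 <= Z by exact: sqrtr_ge0.
have ZK : Z ^+ 2 = K by rewrite sqr_sqrtr.
set m := Num.sqrt M.
have m0 : 0 < m by rewrite sqrtr_gt0.
have mM : m ^+ 2 = M by rewrite sqr_sqrtr // ltW.
set t2 := (P / 2) `^ q.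
have t20 : 0 < t2 by rewrite powR_gt0 // divr_gt0.
have t21 : t2 <= 1.
  have h : P / 2 <= 1 by rewrite ler_pdivrMr // mul1r /P; lra.
  have h0 : 0 <= P / 2 by rewrite divr_ge0 // ltW.
  have := @ge0_ler_powR R q (ltW q0) (P / 2) 1 h0 ler01 h.
  by rewrite /= powR1.
set th := Num.sqrt t2.
have th0 : 0 < th by rewrite sqrtr_gt0.
have tht : th ^+ 2 = t2 by rewrite sqr_sqrtr // ltW.
have sPw : Num.sqrt (P * w) <= Z by rewrite ler_sqrt // H5.
have sPw0 : 0 <= Num.sqrt (P * w) := sqrtr_ge0 _.
have sPw2 : Num.sqrt (P * w) ^+ 2 = P * w by rewrite sqr_sqrtr // mulr_ge0 // ltW.
have Hu : M * u <= (th * Z + 2 * e / th) ^+ 2.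
  have E1 : (th * Z + 2 * e / th) ^+ 2 = t2 * K + 4 * e * Z + 4 * e ^+ 2 / t2.
    by rewrite -ZK -tht; field; rewrite gt_eqF.
  rewrite E1.
  have h1 : M * u <= (P * w - M * v) + 4 * e * Num.sqrt (P * w) + 4 * e ^+ 2.
    move: Hm; rewrite -/P -/M => Hm.
    have E : (Num.sqrt (P * w) + 2 * e) ^+ 2
       = Num.sqrt (P * w) ^+ 2 + 4 * e * Num.sqrt (P * w) + 4 * e ^+ 2 by ring.
    rewrite E sPw2 mulrDr in Hm.
    lra.
  apply: le_trans h1 _.
  have h2 : 4 * e * Num.sqrt (P * w) <= 4 * e * Z.
    by rewrite ler_wpM2l // mulr_ge0.
  have h3 : 4 * e ^+ 2 <= 4 * e ^+ 2 / t2.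
    rewrite ler_pdivlMr // -[X in _ <= X]mulr1.
    by apply: ler_wpM2l => //; rewrite mulr_ge0 // sqr_ge0.
  have h4 : P * w - M * v <= t2 * K by move: H34; rewrite /K !mulrA.
  lra.
set Y := (th * Z + 2 * e / th) / m.
have Y0 : 0 <= Y.
  apply: divr_ge0; last exact: ltW.
  apply: addr_ge0; first exact: mulr_ge0 (ltW th0) Z0.
  by apply: divr_ge0; [exact: mulr_ge0 | exact: ltW].
have Hu2 : u <= Y ^+ 2.
  by rewrite /Y expr_div_n mM ler_pdivlMr // mulrC.
have p20 : 0 <= p / 2 by rewrite divr_ge0 // ltW.
have HuY : u `^ (p / 2) <= Y `^ p.
  have := @ge0_ler_powR R (p / 2) p20 u (Y ^+ 2) u0 (sqr_ge0 _) Hu2.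
  rewrite /= -powR_mulrn // -powRrM.
  by have -> : 2%:R * (p / 2) = p by field.
have EA : th `^ p = (P / 2) `^ (1 - p / 2).
  rewrite /th -powR12_sqrt ?ltW // -powRrM /t2 -powRrM.
  by congr (_ `^ _); rewrite /q; field; rewrite gt_eqF.
have EB : Z `^ p = P `^ (p / 2) * G `^ (p / 2) * s.
  rewrite /Z -powR12_sqrt // -powRrM /K.
  have -> : 2^-1 * p = p / 2 by rewrite mulrC.
  rewrite powRM ?powR_ge0 //; last by rewrite mulr_ge0 // ltW.
  rewrite powRM ?(ltW P0) // -powRrM.
  have -> : 2 / p * (p / 2) = 1 by field; rewrite gt_eqF.
  by rewrite powRr1.
have EC : m `^ p = M `^ (p / 2).
  rewrite /m -powR12_sqrt ?ltW // -powRrM.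
  by have -> : 2^-1 * p = p / 2 by rewrite mulrC.
have ED : (P / 2) `^ (1 - p / 2) * P `^ (p / 2) = P * 2 `^ (p / 2 - 1).
  rewrite powR_divr ?(ltW P0) // mulrAC -powRD; last by rewrite (gt_eqF P0) implybT.
  rewrite subrK powRr1 ?(ltW P0) //.
  have -> : p / 2 - 1 = - (1 - p / 2) by ring.
  by rewrite powRN.
have EE : Cbar d p = P * 2 `^ (p / 2 - 1) * (G `^ (p / 2) / M `^ (p / 2)).
  by rewrite /Cbar -/P -/M -/G powR_divr // ltW.
have EF : (2 * e / th) `^ p = 2 `^ p * e `^ p / th `^ p.
  rewrite powR_divr ?(powRM _ (ler0n _ 2) e0) //; [exact: mulr_ge0 | exact: ltW].
have thp : 1 / 2 <= th `^ p.
  rewrite EA.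
  have h : P / 2 <= 1 by rewrite ler_pdivrMr // mul1r /P; lra.
  have h0 : 0 < P / 2 by rewrite divr_gt0.
  apply: le_trans (ger1_powR _ _); first by rewrite ler_pdivrMr // /P; lra.
    by rewrite h0 h.
  lra.
have thp0 : 0 < th `^ p by rewrite powR_gt0.
have Mp0 : 0 < M `^ (p / 2) by rewrite powR_gt0.
have mp0 : 0 < m `^ p by rewrite powR_gt0.
have HY : Y `^ p <= ((th * Z) `^ p + (2 * e / th) `^ p) / m `^ p.
  have N0 : 0 <= th * Z + 2 * e / th.
    apply: addr_ge0; first exact: mulr_ge0 (ltW th0) Z0.
    by apply: divr_ge0; [exact: mulr_ge0 | exact: ltW].
  rewrite /Y powR_divr //; last exact: ltW.
  rewrite ler_pM2r ?invr_gt0 //.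
  apply: subadd_powR => //; first exact: mulr_ge0 (ltW th0) Z0.
    by apply: divr_ge0; [exact: mulr_ge0 | exact: ltW].
  exact: ltW.
apply: le_trans He _; apply: le_trans HuY _; apply: le_trans HY _.
rewrite EC EF (powRM _ (ltW th0) Z0) EB EE.
have E2 : 2 `^ (p + 1) = 2 `^ p * 2.
  rewrite powRD; last by rewrite pnatr_eq0 implybT.
  by rewrite powRr1.
rewrite E2.
set A := 2 `^ p * e `^ p.
have A0 : 0 <= A by rewrite mulr_ge0 ?powR_ge0.
have H1 : th `^ p * (P `^ (p / 2) * G `^ (p / 2) * s)
   = P * 2 `^ (p / 2 - 1) * G `^ (p / 2) * s.
  by rewrite EA -ED; ring.
rewrite mulrDl H1.
have H2 : A / th `^ p <= A * 2.
  rewrite ler_pdivrMr // -mulrA -[X in X <= _]mulr1 ler_wpM2l //.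
  lra.
have -> : P * 2 `^ (p / 2 - 1) * (G `^ (p / 2) / M `^ (p / 2)) * s
   = P * 2 `^ (p / 2 - 1) * G `^ (p / 2) * s / M `^ (p / 2).
  by rewrite mulrA mulrAC.
rewrite lerD2l.
have -> : 2 `^ p * 2 * e `^ p = A * 2 by rewrite /A; ring.
by rewrite ler_pM2r ?invr_gt0.
Qed.
End Scalar4.

Section Vec.
Context {R : realType}.

Lemma ex_subset_card (T : finType) (A : {set T}) n :
  (n <= #|A|)%N -> exists B : {set T}, B \subset A /\ #|B| = n.
Proof.
move/card_geqP => [s [us ss sA]].
exists [set x in s]; split.
  by apply/subsetP => x; rewrite inE; exact: sA.
by rewrite cardsE (card_uniqP us).
Qed.

Lemma l2norm_ge0 n (v : 'cV[R]_n) : 0 <= l2norm v.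
Proof. exact: sqrtr_ge0. Qed.

Lemma l2norm_sq n (v : 'cV[R]_n) : l2norm v ^+ 2 = \sum_i (v i ord0) ^+ 2.
Proof. by rewrite sqr_sqrtr // sumr_ge0 // => i _; exact: sqr_ge0. Qed.

Lemma l2norm_restrict_sq n (v : 'cV[R]_n) (T : {set 'I_n}) :
  l2norm (restrict v T) ^+ 2 = \sum_(i in T) (v i ord0) ^+ 2.
Proof.
rewrite l2norm_sq [RHS]big_mkcond /=; apply: eq_bigr => i _.
by rewrite mxE; case: ifP => _ //; rewrite expr0n.
Qed.

Lemma l2normN n (v : 'cV[R]_n) : l2norm (- v) = l2norm v.
Proof. by rewrite /l2norm; congr Num.sqrt; apply: eq_bigr => i _; rewrite mxE sqrrN. Qed.

Lemma CS n (u v : 'I_n -> R) :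
  \sum_i u i * v i <= Num.sqrt (\sum_i u i ^+ 2) * Num.sqrt (\sum_i v i ^+ 2).
Proof.
set U := \sum_i u i ^+ 2; set V := \sum_i v i ^+ 2.
have U0 : 0 <= U by rewrite sumr_ge0 // => i _; exact: sqr_ge0.
have V0 : 0 <= V by rewrite sumr_ge0 // => i _; exact: sqr_ge0.
have key : forall t, 0 < t -> 2 * \sum_i u i * v i <= t * U + V / t.
  move=> t t0; rewrite mulr_sumr /U /V mulr_sumr mulr_suml -big_split /=.
  apply: ler_sum => i _.
  have : 0 <= (t * u i - v i) ^+ 2 / t by rewrite divr_ge0 ?sqr_ge0 ?ltW.
  have -> : (t * u i - v i) ^+ 2 / t = t * u i ^+ 2 + v i ^+ 2 / t - 2 * (u i * v i).
    by field; rewrite gt_eqF.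
  by rewrite subr_ge0.
have [Uz|Up] := eqVneq U 0.
  have uz : forall i, u i = 0.
    move=> i; have := Uz; rewrite /U => /eqP; rewrite psumr_eq0 => [/allP /(_ i)|j _].
      by rewrite mem_index_enum => /(_ isT) /implyP /(_ isT); rewrite sqrf_eq0 => /eqP.
    exact: sqr_ge0.
  by rewrite big1 ?mulr_ge0 ?sqrtr_ge0 // => i _; rewrite uz mul0r.
have [Vz|Vp] := eqVneq V 0.
  have vz : forall i, v i = 0.
    move=> i; have := Vz; rewrite /V => /eqP; rewrite psumr_eq0 => [/allP /(_ i)|j _].
      by rewrite mem_index_enum => /(_ isT) /implyP /(_ isT); rewrite sqrf_eq0 => /eqP.
    exact: sqr_ge0.
  by rewrite big1 ?mulr_ge0 ?sqrtr_ge0 // => i _; rewrite vz mulr0.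
have sU : 0 < Num.sqrt U by rewrite sqrtr_gt0 lt_neqAle eq_sym Up.
have sV : 0 < Num.sqrt V by rewrite sqrtr_gt0 lt_neqAle eq_sym Vp.
have := key (Num.sqrt V / Num.sqrt U) (divr_gt0 sV sU).
have -> : Num.sqrt V / Num.sqrt U * U + V / (Num.sqrt V / Num.sqrt U)
   = 2 * (Num.sqrt U * Num.sqrt V).
  set a := Num.sqrt U; set b := Num.sqrt V.
  have -> : U = a ^+ 2 by rewrite /a sqr_sqrtr.
  have -> : V = b ^+ 2 by rewrite /b sqr_sqrtr.
  by field; rewrite !gt_eqF.
by rewrite ler_pM2l.
Qed.

Lemma l2normD n (u v : 'cV[R]_n) : l2norm (u + v) <= l2norm u + l2norm v.
Proof.
rewrite -ler_sqr ?nnegrE ?addr_ge0 ?l2norm_ge0 //.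
rewrite sqrrD !l2norm_sq.
have -> : \sum_i ((u + v) i ord0) ^+ 2
   = \sum_i (u i ord0) ^+ 2 + \sum_i (v i ord0) ^+ 2 + 2 * \sum_i u i ord0 * v i ord0.
  rewrite mulr_sumr -!big_split /=; apply: eq_bigr => i _; rewrite mxE; ring.
have := CS (fun i => u i ord0) (fun i => v i ord0).
rewrite /l2norm /= => h; lra.
Qed.

Lemma sparse_restrict n (v : 'cV[R]_n) (T : {set 'I_n}) s : (#|T| <= s)%N -> sparse s (restrict v T).
Proof.
move=> Ts; rewrite /sparse; apply: leq_trans Ts; apply: subset_leq_card.
by apply/subsetP => i; rewrite inE mxE; case: ifP => // _; rewrite eqxx.
Qed.

End Vec.

Section Vec2.
Context {R : realType}.

Lemma choose_T1 n (a : 'I_n -> R) (C : {set 'I_n}) k : (k <= #|C|)%N ->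
  exists T1 : {set 'I_n}, [/\ T1 \subset C, #|T1| = k &
    forall i j, i \in T1 -> j \in C -> j \notin T1 -> a j <= a i].
Proof.
move=> kC.
have [B0 [B0C B0k]] := ex_subset_card kC.
pose P := fun B : {set 'I_n} => (B \subset C) && (#|B| == k).
have PB0 : P B0 by rewrite /P B0C B0k eqxx.
pose F := fun B : {set 'I_n} => \sum_(i in B) a i.
case: (@Order.TotalTheory.arg_maxP _ _ _ B0 P F PB0) => T1 PT1 Hmax.
move: PT1 => /andP[T1C /eqP T1k].
exists T1; split => // i j iT jC jT.
rewrite leNgt; apply/negP => lt.
set T' := j |: (T1 :\ i).
have jT' : j \notin T1 :\ i by rewrite !inE (negbTE jT) andbF.
have PT' : P T'.
  rewrite /P /T' subUset sub1set jC /=.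
  rewrite (subset_trans _ T1C) ?subD1set //=.
  rewrite cardsU1 jT' -T1k (cardsD1 i T1) iT.
  by rewrite add1n.
have := Hmax T' PT'.
rewrite /F /T' big_setU1 //= (big_setD1 i iT) /=.
lra.
Qed.

End Vec2.

Section Core.
Context {R : realType}.

Lemma sqr_powR (x : R) p : (x ^+ 2) `^ (p / 2) = `|x| `^ p.
Proof.
rewrite -(real_normK (num_real x)) -powR_mulrn ?normr_ge0 // -powRrM.
by congr (_ `^ _); field.
Qed.

Lemma core k m (A : 'M[R]_(m, 4 * k)) d (h : 'cV[R]_(4 * k)) eps p
  (T0 : {set 'I_(4 * k)}) :
  (0 < k)%N -> RIP_bound A (2 * k) d -> 0 <= d -> d < 1 -> 0 <= eps ->
  l2norm (A *m h) <= 2 * eps -> 0 < p -> p < 1 -> #|T0| = k ->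
  \sum_(i in T0) `|h i ord0| `^ p <=
  Cbar d p * \sum_(i in ~: T0) `|h i ord0| `^ p
  + 2 `^ (p + 1) * (k%:R * (eps / Num.sqrt k%:R) `^ p) / (1 - d) `^ (p / 2).
Proof.
move=> k0 RIP d0 d1 eps0 hAh p0 p1 T0k.
set a := fun i => `|h i ord0|.
set C := ~: T0.
have Ck : #|C| = (3 * k)%N.
  have := cardsC T0; rewrite card_ord T0k -/C => e; lia.
have kC : (k <= #|C|)%N by rewrite Ck leq_pmull.
have [T1 [T1C T1k T1max]] := choose_T1 a kC.
set T2 := C :\: T1.
have T2k : #|T2| = (2 * k)%N by rewrite cardsDS // Ck T1k; lia.
have T1T0 : T1 \subset ~: T0 by [].
set z01 := restrict h (T0 :|: T1).
set z2 := restrict h T2.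
have hsplit : h = z01 + z2.
  apply/matrixP => i j; rewrite !mxE (ord1 j).
  case: (boolP (i \in T0)) => iT0.
    have : i \notin T2 by rewrite /T2 /C !inE iT0 andbF.
    by move/negbTE => ->; rewrite inE iT0 addr0.
  case: (boolP (i \in T1)) => iT1.
    have : i \notin T2 by rewrite /T2 !inE iT1.
    by move/negbTE => ->; rewrite inE iT1 orbT addr0.
  have -> : i \in T2 by rewrite /T2 /C !inE iT1 iT0.
  by rewrite inE (negbTE iT0) (negbTE iT1) add0r.
have sp01 : sparse (2 * k) z01.
  apply: sparse_restrict; apply: leq_trans (leq_card_setU T0 T1).1 _.
  by rewrite T0k T1k; lia.
have sp2 : sparse (2 * k) z2 by apply: sparse_restrict; rewrite T2k.
set U := \sum_(i in T0) h i ord0 ^+ 2.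
set V := \sum_(i in T1) h i ord0 ^+ 2.
set W := \sum_(i in T2) h i ord0 ^+ 2.
have E01 : l2norm z01 ^+ 2 = U + V.
  rewrite l2norm_restrict_sq (big_setID T0) /= setUK setDUl setDv set0U.
  by rewrite setDE (setIidPl T1T0).
have E2 : l2norm z2 ^+ 2 = W by rewrite l2norm_restrict_sq.
have W0 : 0 <= W by rewrite sumr_ge0 // => i _; exact: sqr_ge0.
have [R01 _] := RIP z01 sp01.
have [_ R2] := RIP z2 sp2.
have HAz2 : l2norm (A *m z2) <= Num.sqrt ((1 + d) * W).
  rewrite -(ger0_norm (l2norm_ge0 (A *m z2))) -sqrtr_sqr ler_sqrt.
    by rewrite -E2.
  by rewrite mulr_ge0 //; lra.
have HAz01 : l2norm (A *m z01) <= Num.sqrt ((1 + d) * W) + 2 * eps.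
  have -> : A *m z01 = A *m h + - (A *m z2) by rewrite hsplit mulmxDr addrK.
  apply: le_trans (l2normD _ _) _; rewrite l2normN addrC; exact: lerD.
have MI : (1 - d) * (U + V) <= (Num.sqrt ((1 + d) * W) + 2 * eps) ^+ 2.
  rewrite -E01; apply: le_trans R01 _.
  by rewrite ler_sqr ?nnegrE ?l2norm_ge0 ?addr_ge0 ?sqrtr_ge0 ?mulr_ge0.
set K := k%:R : R.
have K0 : 0 < K by rewrite /K ltr0n.
have p20 : 0 < p / 2 by rewrite divr_gt0.
have p21 : p / 2 < 1 by rewrite ltr_pdivrMr //; lra.
set H0 := \sum_(i in T0) a i `^ p.
set B := \sum_(i in T1) a i `^ p.
set Cc := \sum_(i in T2) a i `^ p.
have pm : forall T : {set 'I_(4 * k)}, #|T| = k ->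
    \sum_(i in T) a i `^ p <= K * ((\sum_(i in T) h i ord0 ^+ 2) / K) `^ (p / 2).
  move=> T Tk.
  have Tp : (0 < #|T|)%N by rewrite Tk.
  have := pmean (T:=T) (a:=fun i => h i ord0 ^+ 2) p20 p21 (fun i => sqr_ge0 _) Tp.
  rewrite Tk -/K; apply: le_trans; rewrite le_eqVlt; apply/orP; left; apply/eqP.
  by apply: eq_bigr => i _; rewrite sqr_powR.
have Hi : H0 / K <= (U / K) `^ (p / 2) by rewrite ler_pdivrMr // mulrC pm.
have Hii : B / K <= (V / K) `^ (p / 2) by rewrite ler_pdivrMr // mulrC pm.
set q := 2 / p - 1.
have a0 : forall i, 0 <= a i by move=> i; exact: normr_ge0.
have bnd : forall j, j \in T2 -> a j `^ p <= B / K.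
  move=> j jT2.
  have jC : j \in C by move: jT2; rewrite /T2 inE => /andP[].
  have jT1 : j \notin T1 by move: jT2; rewrite /T2 inE => /andP[].
  rewrite ler_pdivlMr // mulrC.
  have -> : K * a j `^ p = \sum_(i in T1) a j `^ p.
    by rewrite sumr_const T1k -/K mulr_natl.
  apply: ler_sum => i iT1.
  exact: (@ge0_ler_powR R p (ltW p0) _ _ (a0 j) (a0 i) (T1max i j iT1 jC jT1)).
have Hiii : W <= (B / K) `^ q * Cc.
  rewrite /W /Cc mulr_sumr; apply: ler_sum => j jT2.
  have -> : h j ord0 ^+ 2 = a j `^ p * (a j `^ p) `^ q.
    rewrite -powRrM -powRD.
      have -> : p + p * q = 2 by rewrite /q; field; rewrite gt_eqF.
      by rewrite powR_mulrn ?a0 // /a real_normK // num_real.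
    have -> : p + p * q = 2 by rewrite /q; field; rewrite gt_eqF.
    by rewrite pnatr_eq0.
  rewrite mulrC; apply: ler_wpM2r; first exact: powR_ge0.
  apply: (@ge0_ler_powR R q _ _ _ (powR_ge0 _ _) _ (bnd j jT2)).
    rewrite /q subr_ge0 ler_pdivlMr // mul1r; lra.
  have B0 : 0 <= B by rewrite /B sumr_ge0 // => i _; exact: powR_ge0.
  by rewrite nnegrE; apply: divr_ge0 => //; exact: ltW.
have PW0 : 0 <= (1 + d) * W by rewrite mulr_ge0 //; lra.
set sk := Num.sqrt K.
have sk0 : 0 < sk by rewrite sqrtr_gt0.
have Ksk : K = sk ^+ 2 by rewrite sqr_sqrtr // ltW.
have Hiv : (1 - d) * (U / K + V / K) <= (Num.sqrt ((1 + d) * (W / K)) + 2 * (eps / sk)) ^+ 2.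
  have -> : Num.sqrt ((1 + d) * (W / K)) = Num.sqrt ((1 + d) * W) / sk.
    by rewrite mulrA sqrtrM // sqrtrV // ltW.
  have -> : (Num.sqrt ((1 + d) * W) / sk + 2 * (eps / sk)) ^+ 2
      = (Num.sqrt ((1 + d) * W) + 2 * eps) ^+ 2 / K.
    by rewrite Ksk; field; rewrite gt_eqF.
  have -> : (1 - d) * (U / K + V / K) = (1 - d) * (U + V) / K.
    by field; rewrite gt_eqF.
  by rewrite ler_pM2r ?invr_gt0.
have U0 : 0 <= U by rewrite sumr_ge0 // => i _; exact: sqr_ge0.
have V0 : 0 <= V by rewrite sumr_ge0 // => i _; exact: sqr_ge0.
have B0 : 0 <= B by rewrite /B sumr_ge0 // => i _; exact: powR_ge0.
have C0 : 0 <= Cc by rewrite /Cc sumr_ge0 // => i _; exact: powR_ge0.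
have Hiii' : W / K <= (B / K) `^ (2 / p - 1) * (Cc / K).
  by rewrite mulrA ler_pM2r ?invr_gt0.
have HF := FS p0 p1 d0 d1 (divr_ge0 U0 (ltW K0)) (divr_ge0 V0 (ltW K0))
  (divr_ge0 W0 (ltW K0)) (divr_ge0 B0 (ltW K0)) (divr_ge0 C0 (ltW K0))
  (divr_ge0 eps0 (ltW sk0)) Hi Hii Hiii' Hiv.
have -> : \sum_(i in ~: T0) a i `^ p = B + Cc.
  by rewrite -/C (big_setID T1) /= (setIidPr T1C).
rewrite ler_pdivrMr // in HF.
apply: le_trans HF _.
rewrite le_eqVlt; apply/orP; left; apply/eqP.
have Mp : (1 - d) `^ (p / 2) != 0 by rewrite gt_eqF // powR_gt0 // subr_gt0.
by field; rewrite Mp -/K gt_eqF.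
Qed.

End Core.

Section Main.
Context {R : realType}.

Lemma lp_pow n p (v : 'cV[R]_n) : 0 < p -> lpnorm p v `^ p = \sum_i `|v i ord0| `^ p.
Proof.
move=> p0; rewrite /lpnorm -powRrM mul1r mulVf ?gt_eqF // powRr1 //.
by rewrite sumr_ge0 // => i _; exact: powR_ge0.
Qed.

Lemma lp_restrict n p (v : 'cV[R]_n) T : 0 < p ->
  lpnorm p (restrict v T) `^ p = \sum_(i in T) `|v i ord0| `^ p.
Proof.
move=> p0; rewrite lp_pow // [RHS]big_mkcond /=; apply: eq_bigr => i _.
by rewrite mxE; case: ifP => // _; rewrite normr0 powR0 // gt_eqF.
Qed.

Lemma sum_split n (F : 'I_n -> R) (T : {set 'I_n}) :
  \sum_i F i = \sum_(i in T) F i + \sum_(i in ~: T) F i.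
Proof.
rewrite (bigID (mem T)) /=; congr (_ + _).
by apply: eq_bigl => i; rewrite inE.
Qed.

Lemma card_lt n k : (k <= n)%N -> #|[set i : 'I_n | (i < k)%N]| = k.
Proof.
move=> kn; rewrite -sum1_card.
rewrite (eq_bigl (fun i : 'I_n => (i < k)%N)); last by move=> i; rewrite inE.
by rewrite (big_ord_narrow kn) sum1_card card_ord.
Qed.

Lemma final_alg (H0 S sg D c : R) : 0 <= c -> c < 1 -> 0 <= sg -> 0 <= D ->
  H0 <= c * S + D -> S <= H0 + 2 * sg ->
  H0 + S <= 2 * (1 + c) / (1 - c) * sg + 2 * D / (1 - c).
Proof.
move=> c0 c1 sg0 D0 h1 h2.
have c1' : 0 < 1 - c by lra.
have -> : 2 * (1 + c) / (1 - c) * sg + 2 * D / (1 - c)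
   = (2 * (1 + c) * sg + 2 * D) / (1 - c) by field; rewrite gt_eqF.
rewrite ler_pdivlMr //.
have f1 : c * S <= c * (H0 + 2 * sg) by rewrite ler_wpM2l.
have f2 : (1 - c) * S <= (1 - c) * (H0 + 2 * sg) by rewrite ler_wpM2l // ltW.
nra.
Qed.

Lemma mainT0 k m (A : 'M[R]_(m, 4 * k)) d (x : 'cV[R]_(4 * k)) eps
  (e : 'cV[R]_m) p (xstar : 'cV[R]_(4 * k)) (T0 : {set 'I_(4 * k)}) :
  (0 < k)%N -> RIP_bound A (2 * k) d -> 0 <= d -> d < 1 -> 0 <= eps ->
  l2norm e <= eps -> 0 < p -> p < 1 ->
  l2norm ((A *m x + e) - A *m xstar) <= eps ->
  (forall gamma : 'cV[R]_(4 * k),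
      l2norm ((A *m x + e) - A *m gamma) <= eps -> lpnorm p xstar <= lpnorm p gamma) ->
  Cbar d p < 1 -> #|T0| = k ->
  \sum_i `|(x - xstar) i ord0| `^ p <=
    C0bar d p * \sum_(i in ~: T0) `|x i ord0| `^ p
    + C1bar d p * k%:R `^ (1 - p / 2) * eps `^ p.
Proof.
move=> k0 RIP d0 d1 eps0 he p0 p1 hxs hmin Cb1 T0k.
set h := x - xstar.
have hAh : l2norm (A *m h) <= 2 * eps.
  have -> : A *m h = ((A *m x + e) - A *m xstar) + - e.
    by rewrite /h mulmxBr; rewrite addrAC addrK.
  apply: le_trans (l2normD _ _) _; rewrite l2normN; lra.
have core0 := core k0 RIP d0 d1 eps0 hAh p0 p1 T0k.
have feas : l2norm ((A *m x + e) - A *m x) <= eps by rewrite addrAC subrr add0r.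
have hlp := hmin x feas.
have lpge0 : forall v : 'cV[R]_(4 * k), 0 <= lpnorm p v by move=> v; exact: powR_ge0.
have Scone : \sum_i `|xstar i ord0| `^ p <= \sum_i `|x i ord0| `^ p.
  have := @ge0_ler_powR R p (ltW p0) _ _ (lpge0 xstar) (lpge0 x) hlp.
  by rewrite /= !lp_pow.
have pw : forall a b c : R, 0 <= a -> 0 <= b -> 0 <= c -> a <= b + c ->
    a `^ p <= b `^ p + c `^ p.
  move=> a b c a0 b0 c0 abc.
  apply: le_trans (subadd_powR b0 c0 p0 (ltW p1)).
  exact: (@ge0_ler_powR R p (ltW p0) _ _ a0 (addr_ge0 b0 c0) abc).
have P1 : forall i, `|x i ord0| `^ p <= `|xstar i ord0| `^ p + `|h i ord0| `^ p.
  move=> i; apply: pw => //.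
  have -> : x i ord0 = xstar i ord0 + h i ord0 by rewrite /h !mxE; ring.
  exact: ler_normD.
have P2 : forall i, `|h i ord0| `^ p <= `|x i ord0| `^ p + `|xstar i ord0| `^ p.
  move=> i; apply: pw => //; rewrite /h !mxE.
  by apply: le_trans (ler_normD _ _) _; rewrite normrN.
set H0 := \sum_(i in T0) `|h i ord0| `^ p.
set S := \sum_(i in ~: T0) `|h i ord0| `^ p.
set sg := \sum_(i in ~: T0) `|x i ord0| `^ p.
have SH : S <= H0 + 2 * sg.
  have a1 : \sum_(i in T0) `|x i ord0| `^ p <=
      \sum_(i in T0) `|xstar i ord0| `^ p + H0.
    by rewrite -big_split; apply: ler_sum => i _; exact: P1.
  have a2 : S <= sg + \sum_(i in ~: T0) `|xstar i ord0| `^ p.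
    by rewrite -big_split; apply: ler_sum => i _; exact: P2.
  move: Scone; rewrite (sum_split _ T0) (sum_split (fun i => `|x i ord0| `^ p) T0) -/sg.
  lra.
set K := k%:R : R.
have K0 : 0 < K by rewrite /K ltr0n.
have KE : K * (eps / Num.sqrt K) `^ p = K `^ (1 - p / 2) * eps `^ p.
  rewrite powR_divr ?sqrtr_ge0 // -powR12_sqrt ?ltW // -powRrM.
  rewrite powRB; last by rewrite (gt_eqF K0) implybT.
  rewrite powRr1 ?ltW // [2^-1 * p]mulrC.
  have : K `^ (p / 2) != 0 by rewrite gt_eqF // powR_gt0.
  by move=> ?; field.
have Mp0 : 0 < (1 - d) `^ (p / 2) by rewrite powR_gt0 // subr_gt0.
set c := Cbar d p.
have c0 : 0 <= c.
  rewrite /c /Cbar; apply: mulr_ge0; first apply: mulr_ge0; try exact: powR_ge0.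
  lra.
set D := 2 `^ (p + 1) * (K `^ (1 - p / 2) * eps `^ p) / (1 - d) `^ (p / 2).
have D0 : 0 <= D.
  rewrite /D; apply: divr_ge0; last exact: ltW.
  by apply: mulr_ge0; [exact: powR_ge0 | apply: mulr_ge0; exact: powR_ge0].
rewrite -/K KE -/c -/D in core0.
have sg0 : 0 <= sg by rewrite /sg sumr_ge0 // => i _; exact: powR_ge0.
have C1E : C1bar d p * K `^ (1 - p / 2) * eps `^ p = 2 * D / (1 - c).
  rewrite /C1bar -/c /D.
  have -> : p + 2 = (p + 1) + 1 by ring.
  rewrite powRD; last by rewrite pnatr_eq0 implybT.
  rewrite powRr1 //.
  have : 1 - c != 0 by rewrite gt_eqF // subr_gt0.
  have : (1 - d) `^ (p / 2) != 0 by rewrite gt_eqF.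
  by move=> h1 h2; field; rewrite ?h1 ?h2.
rewrite (sum_split _ T0) -/H0 -/S C1E /C0bar -/c.
exact: final_alg.
Qed.

End Main.

Unset Implicit Arguments. Set Strict Implicit.
End Aux.
Import Aux.

Theorem theorem3 (R : realType) (k m : nat) (A : 'M[R]_(m, 4 * k)) (d : R)
  (x : 'cV[R]_(4 * k)) (eps : R) (e : 'cV[R]_m) (p : R) (xstar : 'cV[R]_(4 * k)) :
  (0 < k)%N -> (0 < m)%N ->
  is_RIC A (2 * k) d -> Num.sqrt 2 / 2 <= d -> d < 1 ->
  0 <= eps -> l2norm e <= eps ->
  0 < p -> p < 1 ->
  (* xstar solves min ||gamma||_p s.t. ||y - A gamma||_2 <= eps, y = A x + e *)
  l2norm ((A *m x + e) - A *m xstar) <= eps ->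
  (forall gamma : 'cV[R]_(4 * k),
      l2norm ((A *m x + e) - A *m gamma) <= eps -> lpnorm p xstar <= lpnorm p gamma) ->
  Cbar d p < 1 ->
  lpnorm p (x - xstar) `^ p <=
    C0bar d p * lpnorm p (restrict x [set i : 'I_(4 * k) | (k <= i)%N]) `^ p
    + C1bar d p * k%:R `^ (1 - p / 2) * eps `^ p
  /\ (eps = 0 -> sparse k x -> xstar = x).
Proof.
move=> k0 m0 [RIP _] hd d1 eps0 he p0 p1 hxs hmin Cb1.
have d0 : 0 <= d by apply: le_trans hd; rewrite divr_ge0 ?sqrtr_ge0.
split.
  set T0 := ~: [set i : 'I_(4 * k) | (k <= i)%N].
  have T0k : #|T0| = k.
    have -> : T0 = [set i : 'I_(4 * k) | (i < k)%N].
      by apply/setP => i; rewrite !inE -ltnNge.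
    by apply: card_lt; lia.
  have G := mainT0 k0 RIP d0 d1 eps0 he p0 p1 hxs hmin Cb1 T0k.
  have E1 := lp_pow (x - xstar) p0.
  have E2 := lp_restrict x [set i : 'I_(4 * k) | (k <= i)%N] p0.
  rewrite /T0 setCK -E1 -E2 in G.
  exact: G.
move=> eps00 spx.
set S := [set i : 'I_(4 * k) | x i ord0 != 0].
have Sk : (#|S| <= k)%N by [].
have Sc : (k - #|S| <= #|~: S|)%N.
  have := cardsC S; rewrite card_ord => h; lia.
have [B [BS Bk]] := ex_subset_card Sc.
set T0 := S :|: B.
have T0k : #|T0| = k.
  have dj : [disjoint S & B] by rewrite disjoint_sym disjoints_subset.
  have := leq_card_setU S B; move=> [_]; rewrite dj => /eqP ->.
  by rewrite Bk; lia.
have := mainT0 k0 RIP d0 d1 eps0 he p0 p1 hxs hmin Cb1 T0k.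
have -> : \sum_(i in ~: T0) `|x i ord0| `^ p = 0.
  apply: big1 => i; rewrite !inE negb_or => /andP[+ _].
  by rewrite negbK => /eqP ->; rewrite normr0 powR0 // gt_eqF.
rewrite eps00 powR0 ?gt_eqF // !mulr0 addr0 => hle.
have hz : forall i, `|(x - xstar) i ord0| `^ p = 0.
  move=> i; apply/eqP; rewrite eq_le; apply/andP; split; last exact: powR_ge0.
  apply: le_trans hle.
  rewrite (bigD1 i) //.
  have s0 : 0 <= \sum_(j | j != i) `|(x - xstar) j ord0| `^ p.
    by apply: sumr_ge0 => j _; exact: powR_ge0.
  by apply: ler_wpDr.
apply/matrixP => i j; rewrite (ord1 j).
have := hz i => /powR_eq0_eq0 /eqP; rewrite normr_eq0 !mxE subr_eq0 => /eqP e1.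
by rewrite e1.
Qed.
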